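(* Let $\mathcal G$ be a synchronous game. There is $C>0$ depending only on $|A|$ such that: if $z^i_a\mapsto X^i_a$ is a unitary $\epsilon$-representation of the SynchBCS algebra $\mathscr B(\mathcal G)$ on $\mathbb C^d$ with respect to $\|\cdot\|_f$ (each $X^i_a$ unitary), then $p^i_a\mapsto\frac12(\mathbb 1-X^i_a)$ is a $C\epsilon$-representation of the synchronous algebra $\mathcal A(\mathcal G)$ with respect to $\|\cdot\|_f$.
   Context: A synchronous game has finite input set $I$, output set $A$ (same for both players) and predicate $V:A\times A\times I\times I\to\{0,1\}$ with $V(a,b|i,i)=0$ whenever $a\ne b$. The synchronous algebra $\mathcal A(\mathcal G)$ has generators $p^i_a$ and relations $(p^i_a)^2=p^i_a=(p^i_a)^*$; $\sum_ap^i_a=1$ for each $i$; $p^i_ap^j_b=0$ whenever $V(a,b|i,j)=0$. The SynchBCS algebra $\mathscr B(\mathcal G)$ has generators $z^i_a$ and relations: $z^i_a=(z^i_a)^*$; $(z^i_a)^2=1$; $\frac12(1+z^i_a+z^j_b-z^i_az^j_b)=1$ whenever $V(a,b|i,j)=0$; $\prod_{a\in A}z^i_a=-1$ for each $i$ (product in a fixed order of $A$); $z^i_az^i_{a'}=z^i_{a'}z^i_a$ for all $a,a'$. $\|A\|_f=\mathrm{tr}(A^*A)^{1/2}/\sqrt d$ is the little Frobenius norm on $M_d(\mathbb C)$. An $\epsilon$-representation is an assignment of matrices to generators (extended to a unital $*$-homomorphism of the free $*$-algebra) with $\|\phi(r)\|_f\le\epsilon$ for every defining relation $r$, a relation $a=b$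 meaning $r=a-b$. *)

(* Defs.v *)
From mathcomp Require Import all_boot all_order all_algebra.
Set Implicit Arguments. Unset Strict Implicit. Unset Printing Implicit Defensive.
Import Order.TTheory GRing.Theory Num.Theory.
Local Open Scope ring_scope.

(* Complex scalars: an arbitrary numClosedFieldType K (e.g. the complex numbers). *)

Definition adjmx (K : numClosedFieldType) (m n : nat) (M : 'M[K]_(m, n)) : 'M[K]_(n, m) :=
  (map_mx Num.conj M)^T.

Definition normf (K : numClosedFieldType) (n : nat) (M : 'M[K]_n.+1) : K :=
  sqrtC (\tr (adjmx M *m M)) / sqrtC (n.+1)%:R.

Definition unitary_mxP (K : numClosedFieldType) (n : nat) (M : 'M[K]_n.+1) : Prop :=
  adjmx M *m M = 1%:M /\ M *m adjmx M = 1%:M.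

Definition synchronous (I A : finType) (V : A -> A -> I -> I -> bool) : Prop :=
  forall (i : I) (a b : A), a != b -> V a b i i = false.

Definition synchBCS_eps_rep (K : numClosedFieldType) (I A : finType)
  (V : A -> A -> I -> I -> bool) (n : nat) (X : I -> A -> 'M[K]_n.+1) (eps : K) : Prop :=
  [/\ (forall i a, normf (X i a - adjmx (X i a)) <= eps),
      (forall i a, normf (X i a * X i a - 1) <= eps),
      (forall i j a b, V a b i j = false ->
          normf (2%:R^-1 *: (1 + X i a + X j b - X i a * X j b) - 1) <= eps),
      (forall i, normf ((\prod_(a <- enum A) X i a) - (- 1)) <= eps) &
      (forall i a a', normf (X i a * X i a' - X i a' * X i a) <= eps)].

Definition synch_eps_rep (K : numClosedFieldType) (I A : finType)
  (V : A -> A -> I -> I -> bool) (n : nat) (P : I -> A -> 'M[K]_n.+1) (eps : K) : Prop :=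
  [/\ (forall i a, normf (P i a * P i a - P i a) <= eps),
      (forall i a, normf (P i a - adjmx (P i a)) <= eps),
      (forall i, normf ((\sum_(a : A) P i a) - 1) <= eps) &
      (forall i j a b, V a b i j = false -> normf (P i a * P j b) <= eps)].

(* Main.v *)
Require Import Defs.
From mathcomp Require Import all_boot all_order all_algebra.
From mathcomp Require Import ring.
Import Order.TTheory GRing.Theory Num.Theory.
Local Open Scope ring_scope.

Section NF.
Variables (K : numClosedFieldType) (n : nat).
Local Notation M := 'M[K]_n.+1.

Definition tr2 (A : M) : K := \tr (adjmx A *m A).

Lemma tr2E (A : M) : tr2 A = \sum_i \sum_k `|A k i| ^+ 2.
Proof.
rewrite /tr2 /mxtrace; apply: eq_bigr => i _; rewrite mxE; apply: eq_bigr => k _.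
by rewrite /adjmx !mxE normCK mulrC.
Qed.

Lemma tr2_ge0 (A : M) : 0 <= tr2 A.
Proof. by rewrite tr2E; apply: sumr_ge0 => i _; apply: sumr_ge0 => k _; apply: exprn_ge0. Qed.

Lemma sqr_normD (x y : K) : `|x + y| ^+ 2 <= 2%:R * `|x| ^+ 2 + 2%:R * `|y| ^+ 2.
Proof.
have h : `|x + y| ^+ 2 + `|x - y| ^+ 2 = 2%:R * `|x| ^+ 2 + 2%:R * `|y| ^+ 2.
  rewrite !normCK !rmorphD !rmorphN /=; ring.
rewrite -h lerDl; exact: exprn_ge0.
Qed.

Lemma tr2D (A B : M) : tr2 (A + B) <= 2%:R * tr2 A + 2%:R * tr2 B.
Proof.
rewrite !tr2E !mulr_sumr -big_split /=; apply: ler_sum => i _.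
rewrite !mulr_sumr -big_split /=; apply: ler_sum => k _.
rewrite mxE; exact: sqr_normD.
Qed.

Lemma tr2Z (c : K) (A : M) : tr2 (c *: A) = `|c| ^+ 2 * tr2 A.
Proof.
rewrite !tr2E mulr_sumr; apply: eq_bigr => i _; rewrite mulr_sumr; apply: eq_bigr => k _.
by rewrite mxE normrM exprMn.
Qed.

Lemma adjmxM (A B : M) : adjmx (A *m B) = adjmx B *m adjmx A.
Proof. by rewrite /adjmx map_mxM trmx_mul. Qed.

Lemma tr2_unitl (U A : M) : unitary_mxP U -> tr2 (U * A) = tr2 A.
Proof.
case=> h1 h2; rewrite /tr2 [U * A]/(_ *m _) adjmxM -mulmxA (mulmxA (adjmx U)) h1 mul1mx //.
Qed.

Lemma tr2_unitr (U A : M) : unitary_mxP U -> tr2 (A * U) = tr2 A.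
Proof.
case=> h1 h2; rewrite /tr2 [A * U]/(_ *m _) adjmxM mulmxA mxtrace_mulC !mulmxA h2 mul1mx //.
Qed.


Lemma normfE (A : M) : normf A = sqrtC (tr2 A) / sqrtC (n.+1)%:R.
Proof. by []. Qed.

Lemma sd_gt0 : 0 < sqrtC ((n.+1)%:R : K).
Proof. by rewrite sqrtC_gt0 ltr0n. Qed.

Lemma normf_ge0 (A : M) : 0 <= normf A.
Proof.
rewrite normfE divr_ge0 //; first by rewrite sqrtC_ge0 tr2_ge0.
exact: ltW sd_gt0.
Qed.

Lemma sqrt_weak (t a b : K) : 0 <= t -> 0 <= a -> 0 <= b ->
  t <= 2%:R * a + 2%:R * b -> sqrtC t <= 2%:R * (sqrtC a + sqrtC b).
Proof.
move=> t0 a0 b0 htab.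
have r0 : 0 <= 2%:R * (sqrtC a + sqrtC b) :> K.
  by rewrite mulr_ge0 // addr_ge0 // sqrtC_ge0.
rewrite -(sqrCK r0) ler_sqrtC ?qualifE /= ?exprn_ge0 //.
apply: (le_trans htab).
rewrite -{1}(sqrtCK a) -{1}(sqrtCK b) -subr_ge0.
set x := sqrtC a; set y := sqrtC b.
have -> : (2%:R * (x + y)) ^+ 2 - (2%:R * x ^+ 2 + 2%:R * y ^+ 2)
   = 2%:R * x ^+ 2 + 2%:R * y ^+ 2 + 8%:R * (x * y) by ring.
have x0 : 0 <= x by rewrite sqrtC_ge0.
have y0 : 0 <= y by rewrite sqrtC_ge0.
by rewrite !addr_ge0 // mulr_ge0 ?exprn_ge0 // mulr_ge0.
Qed.

Lemma normfD (A B : M) : normf (A + B) <= 2%:R * (normf A + normf B).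
Proof.
rewrite !normfE -mulrDl mulrA ler_wpM2r //.
  by rewrite invr_ge0 ltW // sd_gt0.
apply: sqrt_weak; rewrite ?tr2_ge0 //; exact: tr2D.
Qed.

Lemma normfZ (c : K) (A : M) : normf (c *: A) = `|c| * normf A.
Proof.
rewrite !normfE tr2Z sqrtCM ?qualifE /= ?exprn_ge0 ?tr2_ge0 // sqrCK // mulrA //.
Qed.

Lemma normfN (A : M) : normf (- A) = normf A.
Proof. by rewrite -scaleN1r normfZ normrN1 mul1r. Qed.

Lemma normf0 : normf (0 : M) = 0.
Proof. by rewrite -(scale0r (0 : M)) normfZ normr0 mul0r. Qed.

Lemma normf_unitl (U A : M) : unitary_mxP U -> normf (U * A) = normf A.
Proof. by move=> hU; rewrite !normfE tr2_unitl. Qed.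

Lemma normf_unitr (U A : M) : unitary_mxP U -> normf (A * U) = normf A.
Proof. by move=> hU; rewrite !normfE tr2_unitr. Qed.


Local Notation w := (2%:R^-1 : K).

Lemma idI4 (x y : M) : (w *: (1 - x)) * (w *: (1 - y)) = - w *: (w *: (1 + x + y - x * y) - 1).
Proof.
rewrite -scalerAl -scalerAr !(mulrBl, mulrBr, mul1r, mulr1).
move: (x * y) => z.
apply/matrixP => i j; rewrite !mxE.
by field.
Qed.

Lemma idI1 (x : M) : (w *: (1 - x)) * (w *: (1 - x)) - w *: (1 - x) = (w * w) *: (x * x - 1).
Proof.
rewrite -scalerAl -scalerAr !(mulrBl, mulrBr, mul1r, mulr1).
move: (x * x) => z.
apply/matrixP => i j; rewrite !mxE.
by field.
Qed.

Lemma idI2 (x : M) : w *: (1 - x) - adjmx (w *: (1 - x)) = - w *: (x - adjmx x).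
Proof.
apply/matrixP => i j; rewrite /adjmx !mxE rmorphM rmorphB /= rmorphV ?unitfE ?pnatr_eq0 //.
rewrite !conjC_nat (eq_sym j i) rmorph_nat.
by field.
Qed.

Lemma idI3 (x P S : M) : x * P - (1 - 2%:R *: (w *: (1 - x) + S)) =
   x * (P - (1 - 2%:R *: S)) + 4%:R *: ((w *: (1 - x)) * S).
Proof.
rewrite -scalerAl !(mulrBl, mulrBr, mulrDr, mulrDl, mul1r, mulr1) -scalerAr.
move: (x * P) (x * S) => z1 z2.
apply/matrixP => i j; rewrite !mxE.
by field.
Qed.

Lemma idI5 (P S : M) : S - 1 = - w *: (- (P - (1 - 2%:R *: S)) + (P - - 1)).
Proof.
apply/matrixP => i j; rewrite !mxE.
by field.
Qed.

Lemma normf_sum (T : eqType) (s : seq T) (F : T -> M) (e : K) : 0 <= e ->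
  (forall x, x \in s -> normf (F x) <= e) ->
  normf (\sum_(x <- s) F x) <= 4%:R ^+ size s * e.
Proof.
move=> e0; elim: s => [|x s IH] hF /=.
  by rewrite big_nil normf0 expr0 mul1r.
rewrite big_cons; apply: (le_trans (normfD _ _)).
have hx : normf (F x) <= e by apply: hF; rewrite inE eqxx.
have hs : normf (\sum_(y <- s) F y) <= 4%:R ^+ size s * e.
  by apply: IH => y ys; apply: hF; rewrite inE ys orbT.
have q1 : 1 <= 4%:R ^+ size s :> K by rewrite exprn_ege1 // ler1n.
have he : e <= 4%:R ^+ size s * e by rewrite ler_peMl.
apply: (le_trans (ler_wpM2l _ (lerD hx hs))) => //.
rewrite -subr_ge0.
have -> : 4%:R ^+ (size s).+1 * e - 2%:R * (e + 4%:R ^+ size s * e)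
   = 2%:R * (4%:R ^+ size s * e - e) by rewrite exprS; ring.
by rewrite mulr_ge0 // subr_ge0.
Qed.

Lemma arith16 (m : nat) (e : K) : 0 <= e ->
  2%:R * (16%:R ^+ m * e + `|4%:R : K| * (4%:R ^+ m * e)) <= 16%:R ^+ m.+1 * e.
Proof.
move=> e0; rewrite ger0_norm // -subr_ge0.
have h : (4%:R : K) ^+ m <= 16%:R ^+ m by rewrite lerXn2r ?qualifE /= ?ler0n ?ler_nat.
have -> : 16%:R ^+ m.+1 * e - 2%:R * (16%:R ^+ m * e + 4%:R * (4%:R ^+ m * e))
   = 8%:R * ((16%:R ^+ m - 4%:R ^+ m) * e) + 6%:R * (16%:R ^+ m * e) by rewrite exprS; ring.
by rewrite addr_ge0 // mulr_ge0 // mulr_ge0 // ?subr_ge0 // exprn_ge0.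
Qed.

End NF.
Arguments idI1 {K n}.
Arguments idI2 {K n}.
Arguments idI3 {K n}.
Arguments idI4 {K n}.
Arguments idI5 {K n}.
Arguments normfZ {K n}.
Arguments normf_unitl {K n}.
Arguments normfN {K n}.
Arguments normf_ge0 {K n}.
Arguments normf_sum {K n}.
Arguments normfD {K n}.
Arguments normf0 {K n}.
Arguments arith16 {K}.

Theorem mainTheorem14 (K : numClosedFieldType) (nA : nat) :
  exists2 C : K, 0 < C &
    forall (I A : finType) (V : A -> A -> I -> I -> bool),
      #|A| = nA -> synchronous V ->
      forall (n : nat) (X : I -> A -> 'M[K]_n.+1) (eps : K),
        (forall i a, unitary_mxP (X i a)) ->
        synchBCS_eps_rep V X eps ->
        synch_eps_rep V (fun i a => 2%:R^-1 *: (1 - X i a)) (C * eps).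
Proof.
have hw0 : 0 <= (2%:R^-1 : K) by rewrite invr_ge0 ler0n.
have hw1 : (2%:R^-1 : K) <= 1 by rewrite invr_le1 ?unitfE ?pnatr_eq0 ?ltr0n ?ler1n.
have hnw : `|- (2%:R^-1 : K)| = 2%:R^-1 by rewrite normrN ger0_norm.
exists (16%:R ^+ nA + 1).
  by rewrite addr_gt0 // exprn_gt0 // ltr0n.
have hC1 : 1 <= (16%:R ^+ nA + 1 : K) by rewrite lerDr exprn_ge0 // ler0n.
move=> I A V hA hsync n X eps hU [h1 h2 h3 h4 h5].
have heps : forall i : I, 0 <= eps.
  by move=> i; apply: le_trans (h4 i); apply: normf_ge0.
split.
- move=> i a; rewrite idI1 normfZ.
  have e0 := heps i.
  apply: ler_pM; [exact: normr_ge0 | exact: normf_ge0 | | exact: h2].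
  rewrite ger0_norm ?mulr_ge0 //; apply: (le_trans _ hC1).
  by apply: (le_trans (ler_pM hw0 hw0 hw1 hw1)); rewrite mulr1.
- move=> i a; rewrite idI2 normfZ hnw.
  apply: ler_pM; [exact: hw0 | exact: normf_ge0 | | exact: h1].
  exact: (le_trans hw1 hC1).
- move=> i.
  have e0 := heps i.
  have key : forall s : seq A, uniq s ->
     normf (\prod_(a <- s) X i a - (1 - 2%:R *: \sum_(a <- s) 2%:R^-1 *: (1 - X i a)))
       <= 16%:R ^+ size s * eps.
    elim => [|a s IH] /=.
      by rewrite !big_nil scaler0 subr0 subrr normf0 expr0 mul1r.
    case/andP => anot us.
    rewrite !big_cons idI3; apply: (le_trans (normfD _ _)).
    rewrite normf_unitl // normfZ.
    apply: (le_trans _ (arith16 (size s) eps e0)).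
    apply: ler_wpM2l => //; apply: lerD; first exact: IH.
    apply: ler_wpM2l => //; rewrite mulr_sumr.
    apply: normf_sum => // b bs.
    rewrite idI4 normfZ hnw; apply: (le_trans _ (h3 i i a b _)).
      by rewrite -[X in _ <= X]mul1r ler_wpM2r ?normf_ge0.
    apply: hsync; apply/eqP => ab; by rewrite ab bs in anot.
  have -> : \sum_(a : A) 2%:R^-1 *: (1 - X i a) = \sum_(a <- enum A) 2%:R^-1 *: (1 - X i a) :> 'M[K]_n.+1.
    by rewrite big_enum; apply: eq_bigl.
  rewrite (idI5 (\prod_(a <- enum A) X i a)) normfZ hnw.
  apply: (le_trans (ler_wpM2l hw0 (normfD _ _))).
  rewrite mulrA mulVf ?pnatr_eq0 // mul1r normfN mulrDl mul1r.
  apply: lerD; last exact: h4.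
  by rewrite cardE in hA; rewrite -hA; apply: key; apply: enum_uniq.
- move=> i j a b hV; rewrite idI4 normfZ hnw.
  apply: ler_pM; [exact: hw0 | exact: normf_ge0 | | exact: h3].
  exact: (le_trans hw1 hC1).
Qed.
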